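(* Let $G$ be a bipartite $d_1$-regular (multi)graph with $n$ vertices in each part, and let $\alpha$ be an upper bound on the second largest eigenvalue of $G$. Let $\gamma$ be an integer dividing $n$ and set $d_2 = \gamma d_1$. Let $H$ be the bipartite $(d_1,d_2)$-biregular multigraph obtained by partitioning one of the parts of $G$ into groups of $\gamma$ vertices (in an arbitrary way) and merging each group into a single vertex (keeping all edges, with multiplicity). Let $\lambda_2$ be the second largest eigenvalue of $H$. Then $$|\lambda_2| \le \sqrt{d_1d_2}\,\alpha.$$
   Context: Eigenvalues here are those of the non-normalized adjacency matrices (entries count edge multiplicities). For a bipartite biregular graph with degrees $d_L, d_R$, the eigenvalues of the adjacency matrix come in pairs $\pm\lambda$, the largest pair being $\pm\sqrt{d_Ld_R}$; the ''second largest eigenvalue'' is the nonnegative member of the next pair, i.e. the largest absolute value among the eigenvalues after removing one copy of $\sqrt{d_Ld_R}$ and one copy of $-\sqrt{d_Ld_R}$. Merging a set of vertices means replacing them by one vertex adjacent to all neighbors of the merged vertices, with multiplicities added. *)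

(* Defs.v *)
From HB Require Import structures.
From mathcomp Require Import all_boot all_order all_algebra.
From mathcomp Require Import polyrcf.
Set Implicit Arguments. Unset Strict Implicit. Unset Printing Implicit Defensive.
Import Order.TTheory GRing.Theory Num.Theory.
Local Open Scope ring_scope.

(* A bipartite multigraph with left part 'I_m and right part 'I_k is given by
   its biadjacency matrix B : 'M[nat]_(m,k) (B i j = number of edges i--j). *)
Definition bip_adj (R : nzRingType) (m k : nat) (B : 'M[nat]_(m, k)) : 'M[R]_(m + k) :=
  block_mx 0 (map_mx (fun a : nat => a%:R) B) (map_mx (fun a : nat => a%:R) B^T) 0.

(* Eigenvalues of A (with multiplicity) = real roots of its characteristic
   polynomial counted with root multiplicity (a symmetric real matrix has a
   real spectrum).  The "second largest eigenvalue" of a bipartite biregular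
   graph with top eigenvalue s = sqrt(dL dR): remove one copy of s and one
   copy of -s from the spectrum, take the largest absolute value of what
   remains (0 if nothing remains). *)
Definition second_eig (R : rcfType) (N : nat) (A : 'M[R]_N) (s : R) : R :=
  let p := char_poly A in
  \big[Num.max/0]_(x <- rootsR p | ((x == s) + (x == - s) < mup x p)%N) `|x|.

Definition merge_right (m k l : nat) (B : 'M[nat]_(m, k)) (f : 'I_k -> 'I_l)
  : 'M[nat]_(m, l) :=
  \matrix_(i < m, g < l) (\sum_(j < k | f j == g) B i j)%N.

(* Main.v *)
Require Import Defs.
From HB Require Import structures.
From mathcomp Require Import all_boot all_order all_algebra.
From mathcomp Require Import polyrcf complex.
Import Order.TTheory GRing.Theory Num.Theory.
Local Open Scope ring_scope.
Local Open Scope sesquilinear_scope.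
Set Implicit Arguments. Unset Strict Implicit. Unset Printing Implicit Defensive.

Section Core.
Variable C : numClosedFieldType.

Definition nrm n (u : 'rV[C]_n) := (u *m u ^t*) 0 0.

Lemma nrmE n (u : 'rV[C]_n) : nrm u = \sum_i u 0 i * (u 0 i)^*.
Proof. by rewrite /nrm !mxE; apply: eq_bigr => i _; rewrite !mxE. Qed.

Lemma nrm_ge0 n (u : 'rV[C]_n) : 0 <= nrm u.
Proof. by rewrite nrmE sumr_ge0 // => i _; rewrite mul_conjC_ge0. Qed.

Lemma nrm_gt0 n (u : 'rV[C]_n) : u != 0 -> 0 < nrm u.
Proof. by move=> /dotmx_is_dotmx; rewrite dotmxE. Qed.

Lemma trCZ m n (a : C) (A : 'M[C]_(m, n)) : (a *: A) ^t* = a^* *: A ^t*.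
Proof. by apply/matrixP => i j; rewrite !mxE rmorphM. Qed.

Lemma trCM m n p (A : 'M[C]_(m, n)) (B : 'M[C]_(n, p)) : (A *m B) ^t* = B ^t* *m A ^t*.
Proof. by rewrite trmx_mul map_mxM. Qed.

Variables (N : nat) (S P : 'M[C]_N) (d : 'rV[C]_N).
Hypotheses (HP1 : P *m P ^t* = 1%:M) (HP2 : P ^t* *m P = 1%:M)
  (HS : S = P ^t* *m diag_mx d *m P).

Lemma PS : P *m S = diag_mx d *m P.
Proof. by rewrite HS !mulmxA HP1 mul1mx. Qed.

Lemma row_eig i : row i P *m S = d 0 i *: row i P.
Proof.
rewrite -row_mul PS mul_diag_mx; apply/rowP => j; rewrite !mxE.
by [].
Qed.

Lemma char_spec : char_poly S = \prod_(i < N) ('X - (d 0 i)%:P).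
Proof.
have -> : char_poly S = char_poly (diag_mx d).
  rewrite /char_poly /char_poly_mx.
  have -> : 'X%:M - map_mx polyC S =
     map_mx polyC (P ^t*) *m ('X%:M - map_mx polyC (diag_mx d)) *m map_mx polyC P.
    rewrite mulmxBr mulmxBl HS !map_mxM ?mulmxA; congr (_ - _).
    by rewrite mul_mx_scalar -scalemxAl -map_mxM HP2 map_mx1 scalemx1.
  rewrite !det_mulmx mulrC mulrA -det_mulmx -map_mxM HP1 map_mx1 det1 mul1r //.
rewrite char_poly_trig; last by apply/is_trig_mxP => i j lt; rewrite mxE; case: eqP => [e|]; [by move: lt; rewrite e ltnn | by rewrite mulr0n].
by apply: eq_bigr => i _; rewrite mxE eqxx mulr1n.
Qed.

Lemma mup_spec a : mup a (char_poly S) = #|[pred i | d 0 i == a]|.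
Proof.
rewrite char_spec -(big_map (fun i => d 0 i) xpredT (fun y => 'X - y%:P)).
rewrite mu_prod_XsubC count_map cardE /enum_mem size_filter.
by apply: eq_count => i /=; rewrite eq_sym.
Qed.


Lemma nrmP (u : 'rV[C]_N) : nrm (u *m P) = nrm u.
Proof. by rewrite /nrm trCM mulmxA -(mulmxA u) HP1 mulmx1. Qed.

Lemma rowPPt i : row i P *m P ^t* = row i 1%:M.
Proof. by rewrite -row_mul HP1. Qed.

Lemma rowP_neq0 i : row i P != 0.
Proof.
apply/negP => /eqP h; have := rowPPt i; rewrite h mul0mx => /rowP/(_ i).
by rewrite !mxE eqxx /= => /eqP; rewrite eq_sym oner_eq0.
Qed.

Lemma G_core (z : 'rV_N) (al : C) :
 (forall i, d 0 i * (d 0 i)^* <= al ^+ 2 \/ exists e : 'rV_N,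
    [/\ e *m S = d 0 i *: e, e != 0, (forall j, d 0 j = d 0 i -> j = i) & z *m e ^t* = 0]) ->
 nrm (z *m S) <= al ^+ 2 * nrm z.
Proof.
move=> H; set w := z *m P ^t*.
have zE : z = w *m P by rewrite /w -mulmxA HP2 mulmx1.
have nz : nrm z = \sum_i w 0 i * (w 0 i)^* by rewrite zE nrmP nrmE.
have nzS : nrm (z *m S) = \sum_i w 0 i * (w 0 i)^* * (d 0 i * (d 0 i)^*).
  rewrite zE -mulmxA PS mulmxA nrmP nrmE; apply: eq_bigr => i _.
  by rewrite mul_mx_diag !mxE rmorphM mulrACA.
rewrite nzS nz mulr_sumr; apply: ler_sum => i _.
case: (H i) => [le|[e [eE e0 uniq ze]]].
  by rewrite [al ^+ 2 * _]mulrC; apply: ler_wpM2l => //; rewrite mul_conjC_ge0.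
suff -> : w 0 i = 0 by rewrite mul0r !mul0r mulr0.
set g := e *m P ^t*.
have eE' : e = g *m P by rewrite /g -mulmxA HP2 mulmx1.
have gD : g *m diag_mx d = d 0 i *: g.
  have := congr1 (mulmx^~ (P ^t*)) eE.
  rewrite {1}eE' -(mulmxA g P S) PS -scalemxAl /g.
  by rewrite !mulmxA -(mulmxA _ P) HP1 mulmx1.
have gj : forall j, j != i -> g 0 j = 0.
  move=> j ji; have := congr1 (fun M : 'rV[C]_N => M 0 j) gD; rewrite mul_mx_diag !mxE.
  move=> /eqP; rewrite mulrC -subr_eq0 -mulrBl mulf_eq0 subr_eq0 => /orP[/eqP dd|/eqP //].
  by move: ji; rewrite (uniq _ dd) eqxx.
have gi : g 0 i != 0.
  apply: contra e0 => /eqP gi0; rewrite eE'.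
  suff -> : g = 0 by rewrite mul0mx.
  apply/rowP => j; rewrite [RHS]mxE.
  by case: (eqVneq j i) => [->|/gj ->].
have : (z *m e ^t*) 0 0 = w 0 i * (g 0 i)^*.
  rewrite eE' trCM mulmxA -/w mxE (bigD1 i) //= big1 ?addr0; first by rewrite !mxE.
  by move=> j ji; rewrite [_ ^t* _ _]mxE [_^T _ _]mxE gj // rmorph0 mulr0.
rewrite ze mxE => /esym /eqP; rewrite mulf_eq0 conjC_eq0 (negbTE gi) orbF.
by move/eqP.
Qed.

Lemma orth_eig (v e : 'rV[C]_N) (x s : C) : S ^t* = S -> s^* = s ->
  v *m S = x *: v -> e *m S = s *: e -> x != s -> v *m e ^t* = 0.
Proof.
move=> Sh sr vE eE xs.
have h1 : v *m S *m e ^t* = x *: (v *m e ^t*) by rewrite vE -scalemxAl.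
have h2 : v *m S *m e ^t* = s *: (v *m e ^t*).
  by rewrite -mulmxA -{1}Sh -trCM eE trCZ sr -scalemxAr.
have : (x - s) *: (v *m e ^t*) = 0 by rewrite scalerBl -h1 -h2 subrr.
by move/eqP; rewrite scaler_eq0 subr_eq0 (negbTE xs) /= => /eqP.
Qed.

Lemma H_core1 (e : 'rV_N) (s x : C) : S ^t* = S -> s^* = s -> e *m S = s *: e ->
  ((x == s) < #|[pred i | d 0%R i == x]|)%N ->
  exists2 v : 'rV_N, v != 0 & v *m S = x *: v /\ v *m e ^t* = 0.
Proof.
move=> Sh sr eE cnt.
have [i0] : exists k, k \in [pred i | d 0 i == x].
  by apply/card_gt0P; apply: leq_ltn_trans cnt.
rewrite inE => /eqP di; set i := i0.
have riE : row i P *m S = x *: row i P by rewrite row_eig di.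
set a := (row i P *m e ^t*) 0 0.
have m11 : forall M N' : 'M[C]_1, M 0 0 = N' 0 0 -> M = N'.
  by move=> M N' h; apply/matrixP => p q; rewrite !ord1.
case: (eqVneq a 0) => [a0|a0].
  exists (row i P); first exact: rowP_neq0.
  by split => //; apply: m11; rewrite -/a a0 mxE.
have xs : x = s.
  apply/eqP; apply: contraTT a0 => xs; rewrite negbK.
  by rewrite /a (orth_eig Sh sr riE eE xs) mxE.
move: cnt; rewrite xs eqxx (cardD1 i) inE di xs eqxx add1n ltnS => /card_gt0P [j].
rewrite !inE => /andP [ji /eqP dj].
have rjE : row j P *m S = s *: row j P by rewrite row_eig dj.
set b := (row j P *m e ^t*) 0 0.
exists (b *: row i P - a *: row j P).
  apply/negP => /eqP h; have := congr1 (fun M : 'rV[C]_N => (M *m P ^t*) 0 j) h.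
  rewrite mulmxBl -!scalemxAl !rowPPt !mxE eqxx eq_sym (negbTE ji) mulr1 mulr0 sub0r big1 => [|k _]; last by rewrite mxE mul0r.
  move=> /eqP; rewrite oppr_eq0; exact/negP.
split.
  by rewrite mulmxBl -!scalemxAl riE rjE xs !scalerA scalerBr !scalerA mulrC [s * a]mulrC.
apply: m11; rewrite mulmxBl -!scalemxAl.
  by rewrite [LHS]mxE [X in X + _]mxE [X in _ + X]mxE [X in - X]mxE -/a -/b mulrC subrr mxE.
Qed.


Lemma H_core2 (e1 e2 : 'rV_N) (s1 s2 x : C) : S ^t* = S -> s1^* = s1 -> s2^* = s2 ->
  e1 *m S = s1 *: e1 -> e2 *m S = s2 *: e2 -> s1 != s2 ->
  ((x == s1) + (x == s2) < #|[pred i | d 0%R i == x]|)%N ->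
  exists2 v : 'rV_N, v != 0 & [/\ v *m S = x *: v, v *m e1 ^t* = 0 & v *m e2 ^t* = 0].
Proof.
move=> Sh r1 r2 E1 E2 s12 cnt.
case: (eqVneq x s2) => [xs2|xs2].
  have xs1 : x != s1 by rewrite xs2 eq_sym.
  move: cnt; rewrite (negbTE xs1) add0n => cnt.
  have [v v0 [vE v2]] := H_core1 Sh r2 E2 cnt.
  by exists v => //; split => //; apply: orth_eig Sh r1 vE E1 xs1.
move: cnt; rewrite (negbTE xs2) addn0 => cnt.
have [v v0 [vE v1]] := H_core1 Sh r1 E1 cnt.
by exists v => //; split => //; apply: orth_eig Sh r2 vE E2 xs2.
Qed.

End Core.

Lemma mup_map (F K : fieldType) (f : {rmorphism F -> K}) (p : {poly F}) x :
  p != 0 -> mup (f x) (map_poly f p) = mup x p.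
Proof.
move=> p0; have fp0 : map_poly f p != 0 by rewrite map_poly_eq0.
have XE k : ('X - (f x)%:P) ^+ k = map_poly f (('X - x%:P) ^+ k).
  by rewrite rmorphXn /= map_polyXsubC.
apply/eqP; rewrite eqn_leq; apply/andP; split.
  by rewrite mup_leq // XE dvdp_map -mup_leq.
by rewrite mup_geq // XE dvdp_map -mup_geq.
Qed.

Definition natM (K : nzRingType) m k (B : 'M[nat]_(m, k)) : 'M[K]_(m, k) :=
  map_mx (fun a : nat => a%:R) B.

Section Gen.
Variable C : numClosedFieldType.

Lemma natM_conj m k (B : 'M[nat]_(m, k)) : (natM C B) ^t* = natM C (B^T).
Proof. by apply/matrixP => i j; rewrite !mxE conjC_nat. Qed.

Lemma dot_row m k (a c : 'rV[C]_m) (b e : 'rV[C]_k) :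
  row_mx a b *m (row_mx c e) ^t* = a *m c ^t* + b *m e ^t*.
Proof. by rewrite tr_row_mx map_col_mx mul_row_col. Qed.

Lemma bip_mul m k (B : 'M[nat]_(m, k)) (a : 'rV[C]_m) (b : 'rV[C]_k) :
  row_mx a b *m bip_adj C B = row_mx (b *m natM C (B^T)) (a *m natM C B).
Proof. by rewrite /bip_adj mul_row_block !mulmx0 add0r addr0. Qed.

Lemma bip_herm m k (B : 'M[nat]_(m, k)) : (bip_adj C B) ^t* = bip_adj C B.
Proof.
have := natM_conj B; have := natM_conj B^T; rewrite /natM trmxK => h1 h2.
by rewrite /bip_adj tr_block_mx map_block_mx !trmx0 !map_mx0 h1 h2.
Qed.

Lemma const1C n : (const_mx 1 : 'rV[C]_n) ^t* = const_mx 1.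
Proof. by rewrite trmx_const map_const_mx rmorph1. Qed.

Lemma rowsum m k (B : 'M[nat]_(m, k)) d : (forall i, (\sum_j B i j)%N = d) ->
  (const_mx 1 : 'rV[C]_k) *m natM C (B^T) = d%:R *: (const_mx 1 : 'rV[C]_m).
Proof.
move=> H; apply/rowP => i; rewrite !mxE -(H i) natr_sum mulr1.
by apply: eq_bigr => j _; rewrite !mxE mul1r.
Qed.

Lemma colsum m k (B : 'M[nat]_(m, k)) d : (forall j, (\sum_i B i j)%N = d) ->
  (const_mx 1 : 'rV[C]_m) *m natM C B = d%:R *: (const_mx 1 : 'rV[C]_k).
Proof.
move=> H; apply/rowP => j; rewrite !mxE -(H j) natr_sum mulr1.
by apply: eq_bigr => i _; rewrite !mxE mul1r.
Qed.

Definition Pm n l (f : 'I_n -> 'I_l) : 'M[C]_(n, l) := \matrix_(j, g) ((f j == g)%:R).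

Lemma merge_natM m n l (B : 'M[nat]_(m, n)) (f : 'I_n -> 'I_l) :
  natM C (merge_right B f) = natM C B *m Pm f.
Proof.
apply/matrixP => i g; rewrite !mxE natr_sum big_mkcond /=; apply: eq_bigr => j _.
by rewrite !mxE; case: eqP => _; rewrite ?mulr1 ?mulr0.
Qed.

Lemma merge_natMT m n l (B : 'M[nat]_(m, n)) (f : 'I_n -> 'I_l) :
  natM C ((merge_right B f)^T) = (Pm f)^T *m natM C (B^T).
Proof.
have tr p q (X : 'M[nat]_(p, q)) : natM C (X^T) = (natM C X)^T by rewrite /natM map_trmx.
by rewrite !tr merge_natM trmx_mul.
Qed.

Lemma Pm_conj n l (f : 'I_n -> 'I_l) : ((Pm f)^T) ^t* = Pm f.
Proof. by apply/matrixP => i j; rewrite !mxE conjC_nat. Qed.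

Lemma Pm_cnt n l (f : 'I_n -> 'I_l) gamma :
  (forall g, #|[set j | f j == g]| = gamma) ->
  forall g, \sum_j ((f j == g)%:R : C) = gamma%:R.
Proof.
move=> H g; rewrite -(H g) cardsE -sumr_const.
rewrite [RHS]big_mkcond /=; apply: eq_bigr => j _; by rewrite -[j \in _]/(f j == g); case: eqP.
Qed.

Lemma PmTPm n l (f : 'I_n -> 'I_l) gamma :
  (forall g, #|[set j | f j == g]| = gamma) ->
  (Pm f)^T *m Pm f = gamma%:R *: 1%:M.
Proof.
move=> H; apply/matrixP => g h; rewrite !mxE -(Pm_cnt H g) mulr_suml.
apply: eq_bigr => j _; rewrite !mxE; case: (eqVneq g h) => [->|gh].
  by rewrite mulr1; case: eqP; rewrite ?mulr1 ?mulr0.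
rewrite mulr0; case: (eqVneq (f j) g) => [e|]; last by rewrite mul0r.
by rewrite e (negbTE gh) mulr0.
Qed.

Lemma onePm n l (f : 'I_n -> 'I_l) gamma :
  (forall g, #|[set j | f j == g]| = gamma) ->
  (const_mx 1 : 'rV[C]_n) *m Pm f = gamma%:R *: const_mx 1.
Proof.
move=> H; apply/rowP => g; rewrite !mxE -(Pm_cnt H g) mulr1.
by apply: eq_bigr => j _; rewrite !mxE mul1r.
Qed.

Lemma Pm_conj2 n l (f : 'I_n -> 'I_l) : (Pm f) ^t* = (Pm f)^T.
Proof. by apply/matrixP => i j; rewrite !mxE conjC_nat. Qed.

Lemma onePmT n l (f : 'I_n -> 'I_l) :
  (const_mx 1 : 'rV[C]_l) *m (Pm f)^T = const_mx 1.
Proof.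
apply/rowP => j; rewrite !mxE (bigD1 (f j)) //= big1 => [|g gf]; rewrite !mxE.
  by rewrite eqxx mul1r addr0.
by rewrite eq_sym (negbTE gf) mulr0.
Qed.

End Gen.
Section Real.
Variable R : rcfType.
Local Notation C := (R[i]).
Local Notation toC := (real_complex R).

Lemma toC_real (x : R) : toC x \is Num.real.
Proof. by rewrite complex_real. Qed.

Lemma toC_conj (x : R) : (toC x)^* = toC x.
Proof. exact: conj_Creal (toC_real x). Qed.

Lemma spec_setup N (A : 'M[R]_N) : A^T = A -> exists P : 'M[C]_N, exists d : 'rV[C]_N,
  [/\ P *m P ^t* = 1%:M, P ^t* *m P = 1%:M, map_mx toC A = P ^t* *m diag_mx d *m P
    & forall i, d 0 i \is Num.real].
Proof.
move=> AT; set S := map_mx toC A.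
have Sh : S \is hermsymmx.
  apply: realsym_hermsym.
    by apply/is_hermitianmxP; rewrite expr0 scale1r map_mx_id // /S map_trmx AT.
  by apply/mxOverP => i j; rewrite mxE toC_real.
have /orthomx_spectralP SE := hermitian_normalmx Sh.
have Pu := spectral_unitarymx S.
exists (spectralmx S), (spectral_diag S); split.
- exact/unitarymxP.
- by rewrite -invmx_unitary // mulVmx // spectral_unit.
- by rewrite {1}SE invmx_unitary.
- by move=> i; have /mxOverP := hermitian_spectral_diag_real Sh; apply.
Qed.


Lemma bipT m k (B : 'M[nat]_(m, k)) : (bip_adj R B)^T = bip_adj R B.
Proof. by rewrite /bip_adj tr_block_mx !trmx0 -!map_trmx trmxK. Qed.

Lemma map_bip m k (B : 'M[nat]_(m, k)) : map_mx toC (bip_adj R B) = bip_adj C B.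
Proof.
rewrite /bip_adj map_block_mx !map_mx0 -!map_mx_comp; congr block_mx;
  by apply: eq_map_mx => a /=; rewrite rmorph_nat.
Qed.

Lemma se_ge0 N (A : 'M[R]_N) s : 0 <= second_eig A s.
Proof.
rewrite /second_eig; elim: (rootsR _) => [|y l IH]; first by rewrite big_nil.
by rewrite big_cons; case: ifP => // _; rewrite le_max IH orbT.
Qed.

Lemma se_le N (A : 'M[R]_N) s x : x \in rootsR (char_poly A) ->
  ((x == s) + (x == - s) < mup x (char_poly A))%N -> `|x| <= second_eig A s.
Proof.
rewrite /second_eig; elim: (rootsR _) => // y l IH; rewrite inE big_cons.
case/orP => [/eqP -> c|xl c]; first by rewrite c le_max lexx.
by case: ifP => _; [rewrite le_max IH ?orbT | exact: IH].
Qed.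

Lemma se_ub N (A : 'M[R]_N) s c : 0 <= c ->
  (forall x, x \in rootsR (char_poly A) ->
     ((x == s) + (x == - s) < mup x (char_poly A))%N -> `|x| <= c) ->
  second_eig A s <= c.
Proof.
move=> c0; rewrite /second_eig; elim: (rootsR _) => [|y l IH] H; first by rewrite big_nil.
have H' : forall x, x \in l -> ((x == s) + (x == - s) < mup x (char_poly A))%N -> `|x| <= c.
  by move=> x xl; apply: H; rewrite inE xl orbT.
rewrite big_cons; case: ifP => cy; last exact: IH.
by rewrite ge_max H ?mem_head //= IH.
Qed.

Lemma in_rootsR (p : {poly R}) x : p != 0 -> root p x -> x \in rootsR p.
Proof. by move=> p0 rx; rewrite -(roots_on_rootsR p0) rx. Qed.

Lemma sqrt_sq (k : nat) : Num.sqrt ((k * k)%N%:R : R) = k%:R.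
Proof. by rewrite natrM -expr2 sqrtr_sqr ger0_norm // ler0n. Qed.


Lemma toC_inj : injective toC.
Proof. exact: complexI. Qed.

Lemma card2 N (d : 'rV[C]_N) (a : C) i j : d 0 i == a -> d 0 j == a -> j != i ->
  (1 < #|[pred k | d 0%R k == a]|)%N.
Proof.
move=> di dj ji; rewrite (cardD1 i) inE di add1n ltnS; apply/card_gt0P.
by exists j; rewrite !inE ji dj.
Qed.

Lemma G_bound n d1 (B : 'M[nat]_n) (al : R) :
  (forall i, (\sum_j B i j)%N = d1) -> (forall j, (\sum_i B i j)%N = d1) ->
  second_eig (bip_adj R B) (Num.sqrt ((d1 * d1)%N%:R)) <= al ->
  forall y : 'rV[C]_n, y *m (const_mx 1 : 'rV[C]_n) ^t* = 0 ->
  nrm (y *m natM C (B^T)) <= (toC al) ^+ 2 * nrm y.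
Proof.
move=> Hr Hc Hal y y1; rewrite sqrt_sq in Hal.
set A := bip_adj R B.
have al0 : 0 <= al := le_trans (se_ge0 _ _) Hal.
have [P [d [HP1 HP2 HS Hd]]] := spec_setup (bipT B).
rewrite map_bip in HS.
set z := row_mx (0 : 'rV[C]_n) y.
have zS : z *m bip_adj C B = row_mx (y *m natM C B^T) 0 by rewrite bip_mul mul0mx.
have nzS : nrm (z *m bip_adj C B) = nrm (y *m natM C B^T).
  by rewrite zS /nrm dot_row mul0mx addr0.
have nz : nrm z = nrm y by rewrite /nrm dot_row mul0mx add0r.
rewrite -nzS -nz; apply: (G_core HP1 HP2 HS) => i.
have [r dr] : exists r, d 0 i = toC r by exists (complex.Re (d 0 i)); rewrite RRe_real.
rewrite dr toC_conj -!rmorphM -rmorphXn lecR.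
case: (lerP (r * r) (al ^+ 2)) => [le|lt]; first by left.
right.
have rgt : al < `|r|.
  rewrite ltNge; apply: contraTN lt => h; rewrite -leNgt -expr2 -real_normK ?num_real //.
  by rewrite ler_pXn2r // nnegrE.
set pG := char_poly A.
have pG0 : pG != 0 by apply: monic_neq0; apply: char_poly_monic.
have mupE t : mup t pG = #|[pred j | d 0 j == toC t]|.
  by rewrite -(mup_map toC) // map_char_poly map_bip (mup_spec HP1 HP2 HS).
have cntpos : (0 < #|[pred j | d 0%R j == toC r]|)%N.
  by apply/card_gt0P; exists i; rewrite inE dr.
have rroot : root pG r.
  by apply/negPn/negP => nr; move: cntpos; rewrite -mupE mupNroot.
have rin : r \in rootsR pG := in_rootsR pG0 rroot.
have ncond : ~~ ((r == d1%:R) + (r == - d1%:R) < mup r pG)%N.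
  apply/negP => c; have := le_trans (se_le rin c) Hal.
  by rewrite leNgt rgt.
have r0 : r != 0 by apply: contraTneq rgt => ->; rewrite normr0 -leNgt.
have rs : (r == d1%:R) || (r == - d1%:R).
  apply: contraR ncond; rewrite negb_or => /andP [/negbTE -> /negbTE ->].
  by rewrite mupE.
have sns : ((r == d1%:R) + (r == - d1%:R))%N = 1%N.
  case/orP: rs => /eqP rE; move: r0; rewrite rE ?oppr_eq0 => s0.
    by rewrite eqxx -subr_eq0 opprK -mulr2n mulrn_eq0 (negbTE s0).
  by rewrite eqxx eq_sym -subr_eq0 opprK -mulr2n mulrn_eq0 (negbTE s0).
move: ncond; rewrite sns mupE -leqNgt => cnt1.
pose sg : C := if r == d1%:R then 1 else -1.
have rsg : toC r = sg * d1%:R.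
  rewrite /sg; case: (eqVneq r d1%:R) => [->|ne]; first by rewrite rmorph_nat mul1r.
  by move: rs; rewrite (negbTE ne) /= => /eqP ->; rewrite rmorphN rmorph_nat mulN1r.
have sg2 : sg * sg = 1 by rewrite /sg; case: ifP => _; rewrite ?mulr1 ?mulrNN ?mulr1.
have sgC : sg^* = sg by rewrite /sg; case: ifP; rewrite ?rmorphN rmorph1.
have n0 : (0 < n)%N.
  by move: (ltn_ord i); move: (nat_of_ord i) => k; case: (n).
exists (row_mx (const_mx 1) (sg *: const_mx 1)); split.
- rewrite bip_mul -scalemxAl (rowsum _ Hr) (colsum _ Hc) scale_row_mx !scalerA.
  by rewrite rsg mulrC -mulrA sg2 mulr1.
- apply/negP => /eqP /rowP /(_ (lshift n (Ordinal n0))).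
  by rewrite row_mxEl !mxE => /eqP; rewrite oner_eq0.
- move=> j dj; apply/eqP; apply: contraTT cnt1 => ji; rewrite -ltnNge.
  by apply: (card2 (i:=i) (j:=j)) => //; rewrite ?dj ?dr.
- by rewrite dot_row trCZ sgC mul0mx add0r -scalemxAr y1 scaler0.
Qed.


Lemma H_bound n l d1 gamma (B : 'M[nat]_n) (al : R) (f : 'I_n -> 'I_l) :
  (forall i, (\sum_j B i j)%N = d1) -> (forall j, (\sum_i B i j)%N = d1) ->
  second_eig (bip_adj R B) (Num.sqrt ((d1 * d1)%N%:R)) <= al ->
  (0 < gamma)%N -> (forall g, #|[set j | f j == g]| = gamma) -> (0 < d1)%N ->
  forall x : R, x != 0 ->
  let s := Num.sqrt ((d1 * (gamma * d1))%N%:R) in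
  let A := bip_adj R (merge_right B f) in
  ((x == s) + (x == - s) < mup x (char_poly A))%N ->
  x ^+ 2 <= gamma%:R * al ^+ 2.
Proof.
move=> Hr Hc Hal g0 Hg d10 x x0 s A cnd.
have sE : s = Num.sqrt gamma%:R * d1%:R.
  by rewrite /s mulnCA natrM sqrtrM ?ler0n // sqrt_sq.
set B' := merge_right B f.
have [P [d [HP1 HP2 HS Hd]]] := spec_setup (bipT B').
rewrite map_bip in HS.
have Sh := bip_herm C B'.
set c := toC (Num.sqrt gamma%:R).
have cc : c * c = gamma%:R by rewrite -rmorphM -expr2 sqr_sqrtr ?ler0n // rmorph_nat.
have c0 : c != 0.
  by apply/eqP => c0'; move: cc; rewrite c0' mul0r => /eqP; rewrite eq_sym pnatr_eq0; apply/negP; rewrite -lt0n.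
have cC : c^* = c by apply: toC_conj.
have cNC : (- c)^* = - c by rewrite /c -rmorphN toC_conj.
have rsum : (const_mx 1 : 'rV[C]_l) *m natM C (B'^T) = d1%:R *: const_mx 1.
  by rewrite merge_natMT mulmxA onePmT (rowsum _ Hr).
have csum : (const_mx 1 : 'rV[C]_n) *m natM C B' = (gamma * d1)%N%:R *: const_mx 1.
  by rewrite merge_natM mulmxA (colsum _ Hc) -scalemxAl (onePm _ Hg) scalerA -natrM mulnC.
have eig (t : C) : t * t = gamma%:R ->
    row_mx (const_mx 1 : 'rV[C]_n) (t *: (const_mx 1 : 'rV[C]_l)) *m bip_adj C B'
    = (t * d1%:R) *: row_mx (const_mx 1) (t *: const_mx 1).
  move=> tt; rewrite bip_mul -scalemxAl rsum csum scale_row_mx !scalerA.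
  by rewrite mulrAC tt natrM mulrC.
have s1E : toC s = c * d1%:R by rewrite sE rmorphM rmorph_nat.
have s0 : toC s != 0 by rewrite s1E mulf_neq0 // pnatr_eq0 -lt0n.
have s12 : toC s != - toC s.
  apply: contra s0 => /eqP h; have : toC s *+ 2 == 0 by rewrite mulr2n {2}h subrr.
  by rewrite mulrn_eq0.
have E1 := eig c cc; rewrite -s1E in E1.
have E2 := eig (- c); rewrite mulrNN in E2; have {E2} E2 := E2 cc; rewrite mulNr -s1E in E2.
have mupE t : mup t (char_poly A) = #|[pred j | d 0 j == toC t]|.
  have A0 : char_poly A != 0 by apply: monic_neq0; apply: char_poly_monic.
  by rewrite -(mup_map toC) // map_char_poly map_bip (mup_spec HP1 HP2 HS).
have cnt : ((toC x == toC s) + (toC x == - toC s) < #|[pred j | d 0%R j == toC x]|)%N.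
  by rewrite -mupE -rmorphN !(inj_eq toC_inj).
have sC : (toC s)^* = toC s by apply: toC_conj.
have sNC : (- toC s)^* = - toC s by rewrite -rmorphN toC_conj.
have [v v0 [vS v1 v2]] := H_core2 HP1 HS Sh sC sNC E1 E2 s12 cnt.
move: v0 vS v1 v2; rewrite -(hsubmxK v); set a := lsubmx v; set b := rsubmx v.
move=> v0 vS v1 v2.
move: vS; rewrite bip_mul scale_row_mx => /eq_row_mx [ha hb].
have xC0 : toC x != 0 by rewrite fmorph_eq0.
have b1 : b *m (const_mx 1 : 'rV[C]_l) ^t* = 0.
  move: v1 v2; rewrite !dot_row !trCZ cC cNC -!scalemxAr.
  set A0 := (a *m _); set Bv := (b *m _) => h1 h2.
  have h3 : (A0 + c *: Bv) - (A0 + (- c) *: Bv) = 0 by rewrite h1 h2 subrr.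
  have : (c + c) *: Bv = 0.
    by rewrite scalerDl -h3 scaleNr opprD opprK addrACA subrr add0r.
  by move/eqP; rewrite scaler_eq0 -mulr2n mulrn_eq0 (negbTE c0) /= => /eqP.
have b0 : b != 0.
  apply: contra v0 => /eqP b0; move: ha; rewrite b0 mul0mx => /esym /eqP.
  by rewrite scaler_eq0 (negbTE xC0) /= => /eqP ->; rewrite row_mx0.
have nab : nrm a = nrm b.
  have e1 : toC x * nrm b = (a *m natM C B' *m b ^t*) 0 0.
    by rewrite hb -scalemxAl mxE.
  have hM : natM C B' *m b ^t* = (b *m natM C (B'^T)) ^t*.
    by rewrite trCM natM_conj trmxK.
  have e2 : toC x * nrm a = (a *m natM C B' *m b ^t*) 0 0.
    by rewrite -mulmxA hM ha trCZ toC_conj -scalemxAr mxE.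
  by apply: (mulfI xC0); rewrite e2 e1.
set y := b *m (Pm C f)^T.
have y1 : y *m (const_mx 1 : 'rV[C]_n) ^t* = 0.
  rewrite /y -mulmxA -Pm_conj2 -trCM (onePm _ Hg) trCZ conjC_nat -scalemxAr b1.
  by rewrite scaler0.
have ny : nrm y = gamma%:R * nrm b.
  rewrite /nrm /y trCM Pm_conj !mulmxA -(mulmxA b) (PmTPm _ Hg).
  by rewrite -scalemxAr mulmx1 -scalemxAl mxE.
have yB : y *m natM C (B^T) = toC x *: a.
  by rewrite /y -mulmxA -merge_natMT ha.
have GB := G_bound Hr Hc Hal y1.
rewrite yB ny in GB.
have nxa : nrm (toC x *: a) = toC x * toC x * nrm a.
  by rewrite /nrm trCZ toC_conj -scalemxAr -scalemxAl scalerA mxE.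
rewrite nxa nab in GB.
have nb0 : 0 < nrm b := nrm_gt0 b0.
rewrite -lecR -(ler_pM2r nb0) rmorphXn expr2 rmorphM rmorphXn rmorph_nat.
by rewrite mulrA [toC al ^+ 2 * _]mulrC in GB; exact: GB.
Qed.

End Real.

Unset Implicit Arguments.
Set Strict Implicit.

Theorem proposition2 (R : rcfType) (n d1 gamma : nat) (B : 'M[nat]_n) (alpha : R)
  (f : 'I_n -> 'I_(n %/ gamma))
  (HrowG : forall i : 'I_n, (\sum_(j < n) B i j)%N = d1)
  (HcolG : forall j : 'I_n, (\sum_(i < n) B i j)%N = d1)
  (Halpha : second_eig (bip_adj R B) (Num.sqrt ((d1 * d1)%N%:R)) <= alpha)
  (Hgamma_pos : (0 < gamma)%N) (Hgamma_dvd : (gamma %| n)%N)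
  (Hgroups : forall g : 'I_(n %/ gamma), #|[set j | f j == g]| = gamma) :
  let d2 := (gamma * d1)%N in
  `| second_eig (bip_adj R (merge_right B f)) (Num.sqrt ((d1 * d2)%N%:R)) |
    <= Num.sqrt ((d1 * d2)%N%:R) * alpha.
Proof.
cbv zeta; set d2 := (gamma * d1)%N.
have al0 : 0 <= alpha := le_trans (se_ge0 _ _) Halpha.
rewrite ger0_norm ?se_ge0 //.
apply: se_ub; first by rewrite mulr_ge0 ?sqrtr_ge0.
move=> x xin cnd.
case: (eqVneq x 0) => [->|x0]; first by rewrite normr0 mulr_ge0 ?sqrtr_ge0.
case: (posnP d1) => [d10|d1pos].
  exfalso.
  have B0 i j : B i j = 0%N.
    have /eqP := HrowG i; rewrite d10 sum_nat_eq0 => /forallP /(_ j) /=.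
    by move/eqP.
  have M0 : merge_right B f = 0.
    by apply/matrixP => i g; rewrite !mxE big1 // => j _; apply: B0.
  have : eigenvalue (bip_adj R (merge_right B f)) x.
    by rewrite eigenvalue_root_char; apply: (root_roots xin).
  case/eigenvalueP => v; rewrite M0 /bip_adj trmx0 !map_mx0 block_mx0 mulmx0.
  move=> /esym /eqP; rewrite scaler_eq0 (negbTE x0) /= => /eqP -> .
  by rewrite eqxx.
have h := H_bound HrowG HcolG Halpha Hgamma_pos Hgroups d1pos x0 cnd.
have sE : Num.sqrt ((d1 * d2)%N%:R) = Num.sqrt gamma%:R * (d1%:R : R).
  by rewrite /d2 mulnCA natrM sqrtrM ?ler0n // sqrt_sq.
rewrite sE.
have g0 : 0 <= Num.sqrt (gamma%:R : R) := sqrtr_ge0 _.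
apply: (@le_trans _ _ (Num.sqrt gamma%:R * alpha)).
  rewrite -(@ler_pXn2r _ 2) // ?nnegrE ?mulr_ge0 //.
  by rewrite real_normK ?num_real // exprMn sqr_sqrtr ?ler0n.
rewrite mulrAC; apply: ler_peMr; first by rewrite mulr_ge0.
by rewrite ler1n.
Qed.
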